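(* Let $n\ge1$ and let $\alpha=(\alpha_t)_{t\ge2},\beta=(\beta_t)_{t\ge2},\gamma=(\gamma_t)_{t\ge2},\delta=(\delta_t)_{t\ge2}$ be sequences of nonnegative integers. The number of Type OC permutations $\sigma\in\mathfrak S_n$ with $\mathrm{nu}_t(\sigma)=\alpha_t$, $\mathrm{cu}_t(\sigma)=\beta_t$, $\mathrm{nl}_t(\sigma)=\gamma_t$, $\mathrm{cl}_t(\sigma)=\delta_t$ for all $t\ge2$ equals the number of Type OC permutations $\sigma\in\mathfrak S_n$ with $\mathrm{nu}_t(\sigma)=\beta_t$, $\mathrm{cu}_t(\sigma)=\alpha_t$, $\mathrm{nl}_t(\sigma)=\delta_t$, $\mathrm{cl}_t(\sigma)=\gamma_t$ for all $t\ge2$. That is, the label $(\mathrm{nu}_2,\dots;\mathrm{cu}_2,\dots;\mathrm{nl}_2,\dots;\mathrm{cl}_2,\dots)$ and the label $(\mathrm{cu}_2,\dots;\mathrm{nu}_2,\dots;\mathrm{cl}_2,\dots;\mathrm{nl}_2,\dots)$ are equidistributed over Type OC permutations of $[n]$.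
   Context: For $\sigma\in\mathfrak S_n$: the upper arcs of $\sigma$ are the pairs $(a,\sigma(a))$ with $a\le\sigma(a)$ (a fixed point gives a loop $(a,a)$); the lower arcs are the pairs $(\sigma(a),a)$ with $\sigma(a)<a$. An element $x\in[n]$ is an upper opener if $x\le\sigma(x)$, an upper closer if $\sigma^{-1}(x)\le x$, a lower opener if $\sigma^{-1}(x)>x$, and a lower closer if $\sigma(x)<x$. For $t\ge2$: an upper $t$-crossing (enhanced) is a set of $t$ upper arcs $(a_1,b_1),\dots,(a_t,b_t)$ with $a_1<\dots<a_t\le b_1<b_2<\dots<b_t$; an upper $t$-nesting (enhanced) is a set of $t$ upper arcs with $a_1<\dots<a_t\le b_t<b_{t-1}<\dots<b_1$; a lower $t$-crossing is a set of $t$ lower arcs $(c_1,d_1),\dots,(c_t,d_t)$ with $c_1<\dots<c_t<d_1<\dots<d_t$; a lower $t$-nesting is a set of $t$ lower arcs with $c_1<\dots<c_t<d_t<\dots<d_1$. Let $\mathrm{nu}_t(\sigma),\mathrm{cu}_t(\sigma),\mathrm{nl}_t(\sigma),\mathrm{cl}_t(\sigma)$ be the numbers of upper $t$-nestings, upper $t$-crossings, lower $t$-nestings and lower $t$-crossings of $\sigma$. $\sigma$ is of Type OC if there are integers $0=s_0<s_1<\dots<s_r=n$ such that each interval $I=[s_{q-1}+1,s_q]$ satisfies $\sigma(I)=I$ and: (a) every lower opener in $I$ is strictly smaller than every lower closer in $I$ (in particular no element is both); (b) there are no $x<y$ in $I$ with $x$ an upper closer and $y$ an upper opener. *)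

(* Defs.v *)
(* Elements of [n] are represented 0-based by 'I_n
   (order-preserving shift x |-> x-1), permutations by 'S_n. *)
From Stdlib Require Import ClassicalEpsilon.
From HB Require Import structures.
From mathcomp Require Import all_boot all_order all_fingroup.
Set Implicit Arguments. Unset Strict Implicit. Unset Printing Implicit Defensive.

Definition pbool (P : Prop) : bool :=
  if excluded_middle_informative P then true else false.

Section Perm.
Variable n : nat.
Implicit Types (s : 'S_n) (x y : 'I_n).

Definition upper_opener s x : bool := (x <= s x)%N.
Definition upper_closer s x : bool := ((s^-1)%g x <= x)%N.
Definition lower_opener s x : bool := (x < (s^-1)%g x)%N.
Definition lower_closer s x : bool := (s x < x)%N.

(* Upper arcs (a, s a) with a <= s a are indexed by their opener a;
   lower arcs (s a, a) with s a < a are indexed by their opener c = s a,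
   whose closer is d = s^-1 c.  A t-crossing / t-nesting is a set of t arcs,
   counted as a strictly increasing t-tuple of openers a_1 < ... < a_t. *)
Definition incr t (f : {ffun 'I_t -> 'I_n}) : bool :=
  [forall i : 'I_t, forall j : 'I_t, (i < j)%N ==> (f i < f j)%N].

Definition cu t s : nat :=
  #|[set f : {ffun 'I_t -> 'I_n} | [&& incr f,
      [forall i : 'I_t, upper_opener s (f i)],
      [forall i : 'I_t, forall j : 'I_t, (f i <= s (f j))%N] &
      [forall i : 'I_t, forall j : 'I_t, (i < j)%N ==> (s (f i) < s (f j))%N]]]|.

Definition nu t s : nat :=
  #|[set f : {ffun 'I_t -> 'I_n} | [&& incr f,
      [forall i : 'I_t, upper_opener s (f i)],
      [forall i : 'I_t, forall j : 'I_t, (f i <= s (f j))%N] &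
      [forall i : 'I_t, forall j : 'I_t, (i < j)%N ==> (s (f j) < s (f i))%N]]]|.

Definition cl t s : nat :=
  #|[set f : {ffun 'I_t -> 'I_n} | [&& incr f,
      [forall i : 'I_t, lower_opener s (f i)],
      [forall i : 'I_t, forall j : 'I_t, (f i < (s^-1)%g (f j))%N] &
      [forall i : 'I_t, forall j : 'I_t, (i < j)%N ==> ((s^-1)%g (f i) < (s^-1)%g (f j))%N]]]|.

Definition nl t s : nat :=
  #|[set f : {ffun 'I_t -> 'I_n} | [&& incr f,
      [forall i : 'I_t, lower_opener s (f i)],
      [forall i : 'I_t, forall j : 'I_t, (f i < (s^-1)%g (f j))%N] &
      [forall i : 'I_t, forall j : 'I_t, (i < j)%N ==> ((s^-1)%g (f j) < (s^-1)%g (f i))%N]]]|.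

(* The interval [lo+1, hi] of [n], 0-based: {x | lo <= x < hi}. *)
Definition block (lo hi : nat) : {set 'I_n} := [set x : 'I_n | (lo <= x < hi)%N].

Definition good_block s (I : {set 'I_n}) : Prop :=
  [/\ s @: I = I,
      (forall x y, x \in I -> y \in I ->
         lower_opener s x -> lower_closer s y -> (x < y)%N) &
      (forall x y, x \in I -> y \in I -> (x < y)%N ->
         ~ (upper_closer s x /\ upper_opener s y))].

(* Type OC: breakpoints 0 = s_0 < s_1 < ... < s_r = n (r >= 1),
   given by the list cuts = [s_1; ...; s_r]. *)
Definition typeOC s : Prop :=
  exists cuts : seq nat,
    [/\ cuts != [::], sorted ltn (0 :: cuts), last 0 cuts = n &
        forall p, p \in zip (0 :: cuts) cuts -> good_block s (block p.1 p.2)].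

Definition label_ok s (a b c d : nat -> nat) : Prop :=
  typeOC s /\ forall t, (2 <= t)%N ->
    [/\ nu t s = a t, cu t s = b t, nl t s = c t & cl t s = d t].

End Perm.

(* Main.v *)
From Stdlib Require Import ClassicalEpsilon.
Require Import Defs.
From HB Require Import structures.
From mathcomp Require Import all_boot all_order all_fingroup.
From mathcomp Require Import zify.
Set Implicit Arguments. Unset Strict Implicit. Unset Printing Implicit Defensive.

Section Main.
Variable n : nat.
Implicit Types (s : 'S_n) (x y z c : 'I_n) (S : {set 'I_n}).

Definition inv s (k : nat) : bool := [forall x : 'I_n, (x < k) ==> (s x < k)].
Definition sb s x y : bool := [forall k : 'I_n.+1, inv s k ==> ((x < k) == (y < k))].

Lemma sbP s x y k : sb s x y -> inv s k -> (x < k) = (y < k).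
Proof.
move=> /forallP H hk; case: (ltnP k n.+1) => kn.
  by have := H (Ordinal kn); rewrite hk /= => /eqP.
by rewrite (leq_trans (ltn_ord x)) ?(leq_trans (ltn_ord y)) // ltnW.
Qed.

Lemma sb_refl s x : sb s x x.
Proof. by apply/forallP => k; apply/implyP. Qed.
Lemma sb_sym s x y : sb s x y -> sb s y x.
Proof. move=> /forallP H; apply/forallP => k; apply/implyP => hk.
by have := H k; rewrite hk /= eq_sym. Qed.
Lemma sb_trans s x y z : sb s x y -> sb s y z -> sb s x z.
Proof. move=> /forallP H1 /forallP H2; apply/forallP => k; apply/implyP => hk.
by have := H1 k; have := H2 k; rewrite hk /= => /eqP <- /eqP ->. Qed.

Lemma inv_img s k : inv s k -> s @: [set z : 'I_n | z < k] = [set z : 'I_n | z < k].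
Proof.
move=> /forallP hk; apply/eqP; rewrite eqEcard card_imset; last exact: perm_inj.
rewrite leqnn andbT; apply/subsetP => y /imsetP[z]; rewrite inE => zk ->.
by rewrite inE; have := hk z; rewrite zk.
Qed.

Lemma inv_compl s k x : inv s k -> k <= x -> k <= s x.
Proof.
move=> hk kx; rewrite leqNgt; apply/negP => sxk.
have : s x \in s @: [set z : 'I_n | z < k] by rewrite inv_img // inE.
case/imsetP => z; rewrite inE => zk /perm_inj ez.
by move: kx; rewrite ez leqNgt zk.
Qed.

Lemma inv_inv s k x : inv s k -> x < k -> (s^-1)%g x < k.
Proof.
move=> hk xk; rewrite ltnNge; apply/negP => /(inv_compl hk).
by rewrite permKV leqNgt xk.
Qed.

Lemma sb_s s x : sb s x (s x).
Proof.
apply/forallP => k; apply/implyP => hk; apply/eqP.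
case: (ltnP x k) => xk.
  by move/forallP: hk => /(_ x); rewrite xk.
by apply/esym/negbTE; rewrite -leqNgt; apply: inv_compl.
Qed.

Lemma sb_sinv s x : sb s x ((s^-1)%g x).
Proof. by apply: sb_sym; have := sb_s s ((s^-1)%g x); rewrite permKV. Qed.

Definition rk (S : {set 'I_n}) (y : 'I_n) := #|[set z in S | z < y]|.
Definition rev (S : {set 'I_n}) (c : 'I_n) : 'I_n :=
  odflt c [pick y in S | rk S y == #|S| - (rk S c).+1].

Lemma rk_mono S y y' : y \in S -> y < y' -> rk S y < rk S y'.
Proof.
move=> yS yy'; apply: proper_card; apply/properP; split.
  apply/subsetP => z; rewrite !inE => /andP[-> zy] /=; exact: ltn_trans yy'.
by exists y; rewrite !inE ?yS ?yy' ?ltnn.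
Qed.

Lemma rk_lt S y : y \in S -> rk S y < #|S|.
Proof.
move=> yS; apply: proper_card; apply/properP; split.
  by apply/subsetP => z; rewrite !inE => /andP[].
by exists y; rewrite // !inE ltnn andbF.
Qed.

Lemma rk_inj S y y' : y \in S -> y' \in S -> rk S y = rk S y' -> y = y'.
Proof.
move=> yS y'S e; apply: val_inj; case: (ltngtP (val y) (val y')) => // h.
  by have := rk_mono yS h; rewrite e ltnn.
by have := rk_mono y'S h; rewrite e ltnn.
Qed.

Lemma card_lt_ord m : m <= n -> #|[set i : 'I_n | i < m]| = m.
Proof.
move=> mn; have -> : [set i : 'I_n | i < m] = [set widen_ord mn i | i : 'I_m].
  apply/setP => i; rewrite !inE; apply/idP/imsetP.
    by move=> im; exists (Ordinal im) => //; apply: val_inj.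
  by case=> j _ ->; rewrite /= ltn_ord.
by rewrite card_imset ?card_ord //; by move=> a b /(congr1 val) /= e; apply: val_inj.
Qed.

Lemma rk_surj S k : k < #|S| -> exists2 y, y \in S & rk S y = k.
Proof.
move=> kS.
have rkn y : rk S y < n.
  apply: leq_ltn_trans (ltn_ord y).
  have e := card_lt_ord (ltnW (ltn_ord y)).
  apply: leq_trans (eq_leq e); apply: subset_leq_card.
  by apply/subsetP => z; rewrite !inE => /andP[].
pose h y := Ordinal (rkn y).
have Sn : #|S| <= n by have := max_card (mem S); rewrite card_ord.
have : h @: S == [set i : 'I_n | i < #|S|].
  rewrite eqEcard card_lt_ord // card_in_imset ?leqnn ?andbT.
    by apply/subsetP => _ /imsetP[y yS ->]; rewrite inE /= rk_lt.
  by move=> y y' yS y'S /(congr1 val) /= /(rk_inj yS y'S).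
move/eqP/setP => /(_ (Ordinal (leq_trans kS Sn))); rewrite !inE kS.
by case/imsetP => y yS /(congr1 val) /= ->; exists y.
Qed.

Lemma rev_spec S c : c \in S -> rev S c \in S /\ rk S (rev S c) = #|S| - (rk S c).+1.
Proof.
move=> cS; rewrite /rev; case: pickP => [y /andP[yS /eqP ry]|]; first by split.
move=> H.
have hk : #|S| - (rk S c).+1 < #|S|.
  by have := rk_lt cS; case: #|S| => // m _; rewrite subSS ltnS leq_subr.
have [y yS ry] := rk_surj hk.
by have := H y; rewrite /= yS ry eqxx.
Qed.

Lemma rev_in S c : c \in S -> rev S c \in S.
Proof. by case/rev_spec. Qed.

Lemma revK S c : c \in S -> rev S (rev S c) = c.
Proof.
move=> cS; have [r1 e1] := rev_spec cS; have [r2 e2] := rev_spec r1.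
apply: (rk_inj r2 cS); rewrite e2 e1; have := rk_lt cS.
by move: (rk S c) => a; case: #|S| => // m; rewrite ltnS => am; rewrite !subSS subKn.
Qed.

Lemma rev_decr S c c' : c \in S -> c' \in S -> c < c' -> rev S c' < rev S c.
Proof.
move=> cS c'S cc'; have [r1 e1] := rev_spec cS; have [r2 e2] := rev_spec c'S.
have h1 := rk_mono cS cc'; have h2 := rk_lt c'S.
have lt : rk S (rev S c') < rk S (rev S c).
  rewrite e1 e2; move: h1 h2; move: (rk S c) (rk S c') => a b.
  case: #|S| => // m; rewrite !subSS ltnS => ab bm.
  lia.
case: (ltngtP (val (rev S c')) (val (rev S c))) => // h.
  by have := rk_mono r1 h; rewrite ltnNge ltnW.
by move: lt; rewrite (val_inj h) ltnn.
Qed.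


Definition CB s x := [set y | sb s x y && upper_closer s y].
Definition LB s x := [set y | sb s x y && lower_closer s y].

Definition F s x := if upper_opener s x then rev (CB s x) (s x)
                    else s (rev (LB s x) x).
Definition G s y := if upper_closer s y then (s^-1)%g (rev (CB s y) y)
                    else rev (LB s y) ((s^-1)%g y).

Lemma CB_sb s x y : sb s x y -> CB s x = CB s y.
Proof.
move=> h; apply/setP => z; rewrite !inE; case: (boolP (sb s x z)) => h1.
  by rewrite (sb_trans (sb_sym h) h1).
by case: (boolP (sb s y z)) => // h2; case/negP: h1; exact: sb_trans h h2.
Qed.

Lemma LB_sb s x y : sb s x y -> LB s x = LB s y.
Proof.
move=> h; apply/setP => z; rewrite !inE; case: (boolP (sb s x z)) => h1.
  by rewrite (sb_trans (sb_sym h) h1).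
by case: (boolP (sb s y z)) => // h2; case/negP: h1; exact: sb_trans h h2.
Qed.

Lemma lcE s x : lower_closer s x = ~~ upper_opener s x.
Proof. by rewrite /lower_closer /upper_opener ltnNge. Qed.
Lemma loE s x : lower_opener s x = ~~ upper_closer s x.
Proof. by rewrite /lower_opener /upper_closer ltnNge. Qed.

Lemma sx_CB s x : upper_opener s x -> s x \in CB s x.
Proof. by move=> h; rewrite inE sb_s /upper_closer permK. Qed.
Lemma x_LB s x : ~~ upper_opener s x -> x \in LB s x.
Proof. by move=> h; rewrite inE sb_refl lcE. Qed.
Lemma x_CB s y : upper_closer s y -> y \in CB s y.
Proof. by move=> h; rewrite inE sb_refl. Qed.
Lemma sinv_LB s y : ~~ upper_closer s y -> (s^-1)%g y \in LB s y.
Proof. by rewrite -loE inE sb_sinv /lower_closer permKV. Qed.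

Lemma FK s : cancel (F s) (G s).
Proof.
move=> x; rewrite /F; case: ifP => ho.
  have cin := sx_CB ho; have := rev_in cin; rewrite inE => /andP[sbx uc].
  rewrite /G uc -(CB_sb sbx) revK // permK //.
have xin := x_LB (negbT ho); have := rev_in xin; rewrite inE => /andP[sbx lc].
rewrite /lower_closer in lc; rewrite /G /upper_closer permK leqNgt lc /=.
by rewrite -(LB_sb (sb_trans sbx (sb_s s _))) revK.
Qed.

Definition Phi s : 'S_n := perm (can_inj (FK s)).

Lemma PhiE s x : Phi s x = F s x.
Proof. by rewrite permE. Qed.

Lemma PhiVE s y : ((Phi s)^-1)%g y = G s y.
Proof. by rewrite -{2}[y](permKV (Phi s)) PhiE FK. Qed.

Lemma sb_Phi s x : sb s x (Phi s x).
Proof.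
rewrite PhiE /F; case: ifP => ho.
  by have := rev_in (sx_CB ho); rewrite inE => /andP[].
have := rev_in (x_LB (negbT ho)); rewrite inE => /andP[h _].
exact: sb_trans h (sb_s s _).
Qed.

Lemma sb_G s y : sb s y (G s y).
Proof. by rewrite -PhiVE; apply: sb_sym; have := sb_Phi s (((Phi s)^-1)%g y); rewrite permKV. Qed.

Definition Good s := forall x y, sb s x y ->
  (lower_opener s x -> lower_closer s y -> x < y) /\
  (upper_opener s x -> upper_closer s y -> x <= y).

Lemma uoPhi s x : Good s -> upper_opener (Phi s) x = upper_opener s x.
Proof.
move=> gd; rewrite {1}/upper_opener PhiE /F; case: ifP => ho.
  have := rev_in (sx_CB ho); rewrite inE => /andP[h uc].
  by have [_ /(_ ho uc)] := gd _ _ h.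
have := rev_in (x_LB (negbT ho)); rewrite inE => /andP[h lc].
set y := rev _ _ in h lc *.
have lo : lower_opener s (s y) by rewrite /lower_opener permK.
have h2 : sb s (s y) x by apply: sb_sym; apply: sb_trans h (sb_s s _).
have [/(_ lo) + _] := gd _ _ h2; rewrite lcE ho => /(_ isT).
by move=> h3; rewrite leqNgt h3.
Qed.

Lemma ucPhi s y : Good s -> upper_closer (Phi s) y = upper_closer s y.
Proof.
move=> gd; rewrite {1}/upper_closer PhiVE /G; case: ifP => hc.
  have := rev_in (x_CB hc); rewrite inE => /andP[h uc].
  set z := rev _ _ in h uc *.
  have uo : upper_opener s ((s^-1)%g z) by rewrite /upper_opener permKV.
  have h2 : sb s ((s^-1)%g z) y by apply: sb_sym; apply: sb_trans h (sb_sinv s _).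
  by have [_ /(_ uo hc)] := gd _ _ h2.
have := rev_in (sinv_LB (negbT hc)); rewrite inE => /andP[h lc].
have [/(_ _ lc) + _] := gd _ _ h; rewrite loE hc => /(_ isT).
by move=> h3; rewrite leqNgt h3.
Qed.

Lemma lcPhi s x : Good s -> lower_closer (Phi s) x = lower_closer s x.
Proof. by move=> gd; rewrite !lcE uoPhi. Qed.
Lemma loPhi s x : Good s -> lower_opener (Phi s) x = lower_opener s x.
Proof. by move=> gd; rewrite !loE ucPhi. Qed.

Lemma invPhi s k : Good s -> inv (Phi s) k = inv s k.
Proof.
move=> gd; apply/idP/idP => hk; last first.
  apply/forallP => x; apply/implyP => xk.
  by rewrite -(sbP (sb_Phi s x) hk).
apply/forallP => x; apply/implyP => xk; rewrite ltnNge; apply/negP => kx.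
pose t := Phi s.
have xJ : sb s x x && (x < k) by rewrite sb_refl.
have sxK : sb s x (s x) && (k <= s x) by rewrite sb_s.
case: (@arg_maxnP _ x (fun z => sb s x z && (z < k)) (fun z : 'I_n => val z) xJ) => m mJ mmax.
case: (@arg_minnP _ (s x) (fun z => sb s x z && (k <= z)) (fun z : 'I_n => val z) sxK) => m' m'K m'min.
move: mJ m'K => /andP[sxm mk] /andP[sxm' km'].
have tmJ : sb s x ((t^-1)%g m) && ((t^-1)%g m < k).
  rewrite (sb_trans sxm) ?PhiVE ?sb_G //=.
  rewrite ltnNge; apply/negP => /(inv_compl hk); rewrite -PhiVE permKV leqNgt mk //.
have ucm : upper_closer s m by rewrite -(ucPhi _ gd); exact: mmax.
have tm'K : sb s x (t m') && (k <= t m').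
  by rewrite (sb_trans sxm') ?sb_Phi //= inv_compl.
have uom' : upper_opener s m' by rewrite -(uoPhi _ gd); exact: m'min.
have [_ /(_ uom' ucm)] := gd _ _ (sb_trans (sb_sym sxm') sxm).
by rewrite leqNgt (leq_trans mk km').
Qed.

Lemma sbPhi s x y : Good s -> sb (Phi s) x y = sb s x y.
Proof. by move=> gd; apply: eq_forallb => k; rewrite invPhi. Qed.

Lemma CBPhi s x : Good s -> CB (Phi s) x = CB s x.
Proof. by move=> gd; apply/setP => y; rewrite !inE sbPhi // ucPhi. Qed.
Lemma LBPhi s x : Good s -> LB (Phi s) x = LB s x.
Proof. by move=> gd; apply/setP => y; rewrite !inE sbPhi // lcPhi. Qed.

Lemma GoodPhi s : Good s -> Good (Phi s).
Proof.
move=> gd x y; rewrite sbPhi // !loPhi // !lcPhi // !uoPhi // !ucPhi //.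
exact: gd.
Qed.

Lemma PhiK s : Good s -> Phi (Phi s) = s.
Proof.
move=> gd; apply/permP => x; rewrite PhiE /F uoPhi //; case: ifP => ho.
  by rewrite CBPhi // PhiE /F ho revK // sx_CB.
have := rev_in (x_LB (negbT ho)); rewrite inE => /andP[h lc].
rewrite LBPhi // PhiE /F; move: lc; rewrite lcE => /negbTE ->.
by rewrite -(LB_sb h) revK // x_LB // ho.
Qed.

Lemma sb_between s x y : x <= y -> y <= s x -> sb s x y.
Proof.
move=> xy ysx; apply/forallP => k; apply/implyP => hk; apply/eqP.
case: (ltnP y k) => yk; first by rewrite (leq_ltn_trans xy yk).
apply/negbTE; apply/negP => xk.
have /forallP /(_ x) := hk; rewrite xk /= => sxk.
by move: (leq_trans yk ysx); rewrite leqNgt sxk.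
Qed.

Lemma sb_between' s x y : x <= y -> y <= (s^-1)%g x -> sb s x y.
Proof.
move=> xy ysx; apply/forallP => k; apply/implyP => hk; apply/eqP.
case: (ltnP y k) => yk; first by rewrite (leq_ltn_trans xy yk).
apply/negbTE; apply/negP => xk.
by have := inv_inv hk xk; rewrite ltnNge (leq_trans yk ysx).
Qed.

Section Up.
Variables (s : 'S_n) (t : nat) (f : {ffun 'I_t -> 'I_n}).
Hypothesis gd : Good s.
Hypothesis op : forall i, upper_opener s (f i).
Hypothesis le : forall i j, f i <= s (f j).

Lemma up_sb i j : sb s (f i) (f j).
Proof.
case: (leqP (f i) (f j)) => h; first exact: sb_between h (le j i).
by apply: sb_sym; apply: sb_between (ltnW h) (le i j).
Qed.

Lemma up_le i j : f i <= Phi s (f j).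
Proof.
have := rev_in (sx_CB (op j)); rewrite inE => /andP[h uc].
have [_ /(_ (op i) uc)] := gd (sb_trans (up_sb i j) h).
by rewrite PhiE /F op.
Qed.

Lemma up_rev i j : s (f i) < s (f j) -> Phi s (f j) < Phi s (f i).
Proof.
move=> h; rewrite !PhiE /F !op (CB_sb (up_sb j i)).
apply: rev_decr => //; first exact: sx_CB.
rewrite (CB_sb (up_sb i j)); exact: sx_CB.
Qed.
End Up.

Section Low.
Variables (s : 'S_n) (t : nat) (f : {ffun 'I_t -> 'I_n}).
Hypothesis gd : Good s.
Hypothesis op : forall i, lower_opener s (f i).
Hypothesis le : forall i j, f i < (s^-1)%g (f j).

Lemma nuc i : ~~ upper_closer s (f i).
Proof. by rewrite -loE. Qed.

Lemma lo_sb i j : sb s (f i) (f j).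
Proof.
case: (leqP (f i) (f j)) => h; first exact: sb_between' h (ltnW (le j i)).
by apply: sb_sym; apply: sb_between' (ltnW h) (ltnW (le i j)).
Qed.

Lemma lo_le i j : f i < ((Phi s)^-1)%g (f j).
Proof.
have := rev_in (sinv_LB (nuc j)); rewrite inE => /andP[h lc].
have [/(_ (op i) lc) + _] := gd (sb_trans (lo_sb i j) h).
by rewrite PhiVE /G (negbTE (nuc j)).
Qed.

Lemma lo_rev i j : (s^-1)%g (f i) < (s^-1)%g (f j) ->
  ((Phi s)^-1)%g (f j) < ((Phi s)^-1)%g (f i).
Proof.
move=> h; rewrite !PhiVE /G !(negbTE (nuc _)) (LB_sb (lo_sb j i)).
apply: rev_decr => //; first exact: sinv_LB (nuc _).
rewrite (LB_sb (lo_sb i j)); exact: sinv_LB (nuc _).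
Qed.
End Low.

Lemma cu_nu s t f : Good s ->
  [&& incr f, [forall i : 'I_t, upper_opener s (f i)],
      [forall i : 'I_t, forall j : 'I_t, (f i <= s (f j))%N] &
      [forall i : 'I_t, forall j : 'I_t, (i < j)%N ==> (s (f i) < s (f j))%N]] ->
  [&& incr f, [forall i : 'I_t, upper_opener (Phi s) (f i)],
      [forall i : 'I_t, forall j : 'I_t, (f i <= Phi s (f j))%N] &
      [forall i : 'I_t, forall j : 'I_t, (i < j)%N ==> (Phi s (f j) < Phi s (f i))%N]].
Proof.
move=> gd /and4P[inc /forallP op /forallP le /forallP mo].
have le' i j : f i <= s (f j) by have /forallP := le i; apply.
apply/and4P; split => //.
- by apply/forallP => i; rewrite uoPhi.
- by apply/forallP => i; apply/forallP => j; apply: up_le.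
- apply/forallP => i; apply/forallP => j; apply/implyP => ij.
  apply: up_rev => //; have /forallP := mo i; move/(_ j); rewrite ij; apply.
Qed.

Lemma nu_cu s t f : Good s ->
  [&& incr f, [forall i : 'I_t, upper_opener s (f i)],
      [forall i : 'I_t, forall j : 'I_t, (f i <= s (f j))%N] &
      [forall i : 'I_t, forall j : 'I_t, (i < j)%N ==> (s (f j) < s (f i))%N]] ->
  [&& incr f, [forall i : 'I_t, upper_opener (Phi s) (f i)],
      [forall i : 'I_t, forall j : 'I_t, (f i <= Phi s (f j))%N] &
      [forall i : 'I_t, forall j : 'I_t, (i < j)%N ==> (Phi s (f i) < Phi s (f j))%N]].
Proof.
move=> gd /and4P[inc /forallP op /forallP le /forallP mo].
have le' i j : f i <= s (f j) by have /forallP := le i; apply.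
apply/and4P; split => //.
- by apply/forallP => i; rewrite uoPhi.
- by apply/forallP => i; apply/forallP => j; apply: up_le.
- apply/forallP => i; apply/forallP => j; apply/implyP => ij.
  apply: up_rev => //; have /forallP := mo i; move/(_ j); rewrite ij; apply.
Qed.

Lemma cl_nl s t f : Good s ->
  [&& incr f, [forall i : 'I_t, lower_opener s (f i)],
      [forall i : 'I_t, forall j : 'I_t, (f i < (s^-1)%g (f j))%N] &
      [forall i : 'I_t, forall j : 'I_t, (i < j)%N ==> ((s^-1)%g (f i) < (s^-1)%g (f j))%N]] ->
  [&& incr f, [forall i : 'I_t, lower_opener (Phi s) (f i)],
      [forall i : 'I_t, forall j : 'I_t, (f i < ((Phi s)^-1)%g (f j))%N] &
      [forall i : 'I_t, forall j : 'I_t, (i < j)%N ==> (((Phi s)^-1)%g (f j) < ((Phi s)^-1)%g (f i))%N]].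
Proof.
move=> gd /and4P[inc /forallP op /forallP le /forallP mo].
have le' i j : f i < (s^-1)%g (f j) by have /forallP := le i; apply.
apply/and4P; split => //.
- by apply/forallP => i; rewrite loPhi.
- by apply/forallP => i; apply/forallP => j; apply: lo_le.
- apply/forallP => i; apply/forallP => j; apply/implyP => ij.
  apply: lo_rev => //; have /forallP := mo i; move/(_ j); rewrite ij; apply.
Qed.

Lemma nl_cl s t f : Good s ->
  [&& incr f, [forall i : 'I_t, lower_opener s (f i)],
      [forall i : 'I_t, forall j : 'I_t, (f i < (s^-1)%g (f j))%N] &
      [forall i : 'I_t, forall j : 'I_t, (i < j)%N ==> ((s^-1)%g (f j) < (s^-1)%g (f i))%N]] ->
  [&& incr f, [forall i : 'I_t, lower_opener (Phi s) (f i)],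
      [forall i : 'I_t, forall j : 'I_t, (f i < ((Phi s)^-1)%g (f j))%N] &
      [forall i : 'I_t, forall j : 'I_t, (i < j)%N ==> (((Phi s)^-1)%g (f i) < ((Phi s)^-1)%g (f j))%N]].
Proof.
move=> gd /and4P[inc /forallP op /forallP le /forallP mo].
have le' i j : f i < (s^-1)%g (f j) by have /forallP := le i; apply.
apply/and4P; split => //.
- by apply/forallP => i; rewrite loPhi.
- by apply/forallP => i; apply/forallP => j; apply: lo_le.
- apply/forallP => i; apply/forallP => j; apply/implyP => ij.
  apply: lo_rev => //; have /forallP := mo i; move/(_ j); rewrite ij; apply.
Qed.

Lemma cuPhi s t : Good s -> cu t (Phi s) = nu t s.
Proof.
move=> gd; apply: eq_card => f; rewrite !inE; apply/idP/idP; last exact: nu_cu.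
by move/(cu_nu (GoodPhi gd)); rewrite PhiK.
Qed.
Lemma nuPhi s t : Good s -> nu t (Phi s) = cu t s.
Proof.
move=> gd; apply: eq_card => f; rewrite !inE; apply/idP/idP; last exact: cu_nu.
by move/(nu_cu (GoodPhi gd)); rewrite PhiK.
Qed.
Lemma clPhi s t : Good s -> cl t (Phi s) = nl t s.
Proof.
move=> gd; apply: eq_card => f; rewrite !inE; apply/idP/idP; last exact: nl_cl.
by move/(cl_nl (GoodPhi gd)); rewrite PhiK.
Qed.
Lemma nlPhi s t : Good s -> nl t (Phi s) = cl t s.
Proof.
move=> gd; apply: eq_card => f; rewrite !inE; apply/idP/idP; last exact: cl_nl.
by move/(nl_cl (GoodPhi gd)); rewrite PhiK.
Qed.

Lemma zip_mem (lo : nat) cuts (p : nat * nat) :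
  p \in zip (lo :: cuts) cuts -> (p.1 \in lo :: cuts) && (p.2 \in cuts).
Proof.
elim: cuts lo => [|c r IH] lo //=; rewrite inE => /orP[/eqP -> | /IH].
  by rewrite /= !inE !eqxx.
by case/andP; rewrite !inE => /orP[->|->] ->; rewrite !orbT.
Qed.

Lemma cover (lo : nat) cuts (x : nat) : lo <= x < last lo cuts ->
  exists2 p, p \in zip (lo :: cuts) cuts & p.1 <= x < p.2.
Proof.
elim: cuts lo => [|c r IH] lo /=; first by case/andP => h1 h2; move: (leq_trans h2 h1); rewrite ltnn.
case/andP => h1 h2; case: (ltnP x c) => xc.
  by exists (lo, c); rewrite ?inE ?eqxx //= h1.
have [p pz hp] := IH c (introT andP (conj xc h2)).
by exists p => //; rewrite inE pz orbT.
Qed.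

Lemma inv_cuts s (lo : nat) cuts : sorted ltn (lo :: cuts) ->
  (forall p, p \in zip (lo :: cuts) cuts -> s @: block n p.1 p.2 = block n p.1 p.2) ->
  forall c : nat, c \in cuts -> forall x : 'I_n, lo <= x < c -> s x < c.
Proof.
elim: cuts lo => [|c0 r IH] lo //= /andP[loc sr] H c.
have mn : all (ltn c0) r by apply: (order_path_min ltn_trans).
have B : s @: block n lo c0 = block n lo c0 by apply: (H (lo, c0)); rewrite inE eqxx.
rewrite inE => cin x /andP[lx xc]; case: (ltnP x c0) => xc0.
  have : s x \in block n lo c0 by rewrite -B imset_f // inE lx.
  rewrite inE => /andP[_ h]; case/orP: cin => [/eqP -> //|cr].
  by apply: ltn_trans h _; move/allP: mn => /(_ _ cr).
case/orP: cin => [/eqP ce|cr]; first by move: xc0; rewrite -ce leqNgt xc.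
apply: (IH c0) => //; first by move=> p pz; apply: H; rewrite inE pz orbT.
by rewrite xc0.
Qed.

Lemma OC_inv s cuts : sorted ltn (0 :: cuts) ->
  (forall p, p \in zip (0 :: cuts) cuts -> s @: block n p.1 p.2 = block n p.1 p.2) ->
  forall c : nat, c \in 0 :: cuts -> inv s c.
Proof.
move=> so H c; rewrite inE => /orP[/eqP -> |cin].
  by apply/forallP => x; rewrite ltn0.
apply/forallP => x; apply/implyP => xc; apply: (inv_cuts so H cin).
by rewrite xc.
Qed.

Lemma blk_sb s cuts (p : nat * nat) x y : sorted ltn (0 :: cuts) ->
  (forall p, p \in zip (0 :: cuts) cuts -> s @: block n p.1 p.2 = block n p.1 p.2) ->
  p \in zip (0 :: cuts) cuts -> x \in block n p.1 p.2 -> sb s x y -> y \in block n p.1 p.2.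
Proof.
move=> so H pz; have /andP[p1 p2] := zip_mem pz.
have i1 := OC_inv so H p1.
have i2 : inv s p.2 by apply: (OC_inv so H); rewrite inE p2 orbT.
rewrite !inE => /andP[a b] h.
by rewrite -(sbP h i2) b andbT leqNgt -(sbP h i1) -leqNgt.
Qed.

Lemma OC_good s : typeOC s -> Good s.
Proof.
case=> cuts [_ so la H].
have H' : forall p, p \in zip (0 :: cuts) cuts -> s @: block n p.1 p.2 = block n p.1 p.2.
  by move=> p /H [].
move=> x y h.
have xl : 0 <= x < last 0 cuts by rewrite la ltn_ord.
have [p pz hp] := cover xl.
have [_ ha hb] := H p pz.
have xb : x \in block n p.1 p.2 by rewrite inE hp.
have yb := blk_sb so H' pz xb h.
split; first exact: ha.
move=> uo uc; rewrite leqNgt; apply/negP => yx.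
exact: (hb y x yb xb yx (conj uc uo)).
Qed.

Lemma OC_Phi s : typeOC s -> typeOC (Phi s).
Proof.
move=> oc; have gd := OC_good oc; case: oc => cuts [ne so la H].
have H' : forall p, p \in zip (0 :: cuts) cuts -> s @: block n p.1 p.2 = block n p.1 p.2.
  by move=> p /H [].
exists cuts; split => // p pz; have [_ ha hb] := H p pz.
split.
- apply/eqP; rewrite eqEcard card_imset ?leqnn ?andbT; last exact: perm_inj.
  apply/subsetP => _ /imsetP[z zb ->]; exact: blk_sb so H' pz zb (sb_Phi s z).
- by move=> x y xb yb; rewrite loPhi // lcPhi //; exact: ha.
- by move=> x y xb yb xy; rewrite ucPhi // uoPhi //; exact: hb.
Qed.

End Main.

Lemma pboolP (P : Prop) : pbool P = true <-> P.
Proof. by rewrite /pbool; case: excluded_middle_informative. Qed.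

Lemma le_card n a b c d :
  #|[set s : 'S_n | pbool (label_ok s a b c d)]| <=
  #|[set s : 'S_n | pbool (label_ok s b a d c)]|.
Proof.
set A := [set s : 'S_n | _].
have gA s : s \in A -> label_ok s a b c d by rewrite inE => /pboolP.
rewrite -(@card_in_imset _ _ (@Phi n) A).
  apply: subset_leq_card; apply/subsetP => _ /imsetP[s sA ->].
  have [oc lab] := gA s sA; have gd := OC_good oc.
  rewrite inE; apply/pboolP; split; first exact: OC_Phi.
  move=> t t2; have [h1 h2 h3 h4] := lab t t2.
  by split; rewrite ?nuPhi ?cuPhi ?nlPhi ?clPhi.
move=> s1 s2 /gA [/OC_good g1 _] /gA [/OC_good g2 _] e.
by rewrite -(PhiK g1) e PhiK.
Qed.

Unset Implicit Arguments.
Set Strict Implicit.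

Theorem mainTheorem4 (n : nat) (hn : (1 <= n)%N)
    (alpha beta gamma delta : nat -> nat) :
  #|[set s : 'S_n | pbool (label_ok s alpha beta gamma delta)]| =
  #|[set s : 'S_n | pbool (label_ok s beta alpha delta gamma)]|.
Proof. by apply/eqP; rewrite eqn_leq !le_card. Qed.
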